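(* Let $S\in\mathcal{B}_A(\mathcal{H})$. Then $$\omega_A^4(S)\le\frac14\Big\|\big(S^{\sharp_A}S\big)^2+\big(SS^{\sharp_A}\big)^2\Big\|_A+\frac12\,\omega_A\big(S^{\sharp_A}S^2S^{\sharp_A}\big).$$
   Context: $\mathcal{H}$ is a complex Hilbert space with inner product $\langle\cdot,\cdot\rangle$, and $A$ is a fixed nonzero positive bounded operator on $\mathcal{H}$. Set $\langle x,y\rangle_A=\langle Ax,y\rangle$ and $\|x\|_A=\|A^{1/2}x\|$. $\mathcal{B}_A(\mathcal{H})$ is the set of bounded operators $T$ for which there exists a bounded $S$ with $\langle Tx,y\rangle_A=\langle x,Sy\rangle_A$ for all $x,y$ (equivalently $\mathcal{R}(T^*A)\subseteq\mathcal{R}(A)$). For $T\in\mathcal{B}_A(\mathcal{H})$, $T^{\sharp_A}=A^\dagger T^*A$ ($A^\dagger$ the Moore–Penrose inverse) is the reduced solution of $AX=T^*A$. For an operator $T$ with $\|Tx\|_A\le\lambda\|x\|_A$ for some $\lambda>0$ and all $x$, $\|T\|_A=\sup\{\|Tx\|_A: \|x\|_A=1\}$, and $\omega_A(T)=\sup\{|\langle Tx,x\rangle_A|:\|x\|_A=1\}$. *)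

(* Defs.v *)
From HB Require Import structures.
From mathcomp Require Import all_boot all_order all_algebra.
From mathcomp Require Import complex.
From mathcomp Require Import boolp classical_sets reals.
From Stdlib Require Import ClassicalEpsilon.
Set Implicit Arguments. Unset Strict Implicit. Unset Printing Implicit Defensive.
Import Order.TTheory GRing.Theory Num.Theory.
Local Open Scope ring_scope.
Local Open Scope classical_set_scope.

Section HilbertDefs.
Variables (R : realType) (H : lmodType R[i]) (ip : H -> H -> R[i]).

Definition hnorm (x : H) : R := Num.sqrt (complex.Re (ip x x)).

Definition is_hilbert_space : Prop :=
  [/\ (forall (a : R[i]) (x y z : H), ip (a *: x + y) z = a * ip x z + ip y z),
      (forall x y : H, ip y x = conjc (ip x y)),
      (forall x : H, 0 <= ip x x),
      (forall x : H, ip x x = 0 -> x = 0) &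
      (forall u : nat -> H,
         (forall e : R, 0 < e -> exists N, forall m n, (N <= m)%N -> (N <= n)%N ->
             hnorm (u m - u n) < e) ->
         exists l : H, forall e : R, 0 < e -> exists N, forall n, (N <= n)%N ->
             hnorm (u n - l) < e)].

Definition bounded_op (T : H -> H) : Prop :=
  (forall (a : R[i]) (x y : H), T (a *: x + y) = a *: T x + T y) /\
  exists M : R, forall x, hnorm (T x) <= M * hnorm x.

(* the Hilbert adjoint T^* (chosen by classical choice; for bounded T on a
   Hilbert space it exists and is unique) *)
Definition adjoint (T : H -> H) : H -> H :=
  epsilon (inhabits (fun x : H => x))
    (fun S : H -> H => forall x y, ip (T x) y = ip x (S y)).

Definition positive_op (A : H -> H) : Prop :=
  bounded_op A /\ forall x, 0 <= ip (A x) x.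

(* Moore-Penrose inverse A^dagger of A, on its domain R(A) + R(A)^perp:
   A^dagger y is the unique z in N(A)^perp with A z - y in R(A)^perp. *)
Definition mp_inverse (A : H -> H) (y : H) : H :=
  epsilon (inhabits (0 : H))
    (fun z : H => (forall w, A w = 0 -> ip z w = 0) /\
                  (forall w, ip (A z - y) (A w) = 0)).

Definition ipA (A : H -> H) (x y : H) : R[i] := ip (A x) y.
Definition normA (A : H -> H) (x : H) : R := Num.sqrt (complex.Re (ipA A x x)).

Definition in_BA (A T : H -> H) : Prop :=
  bounded_op T /\ exists S : H -> H, bounded_op S /\
    forall x y, ipA A (T x) y = ipA A x (S y).

Definition sharpA (A T : H -> H) : H -> H :=
  fun x => mp_inverse A (adjoint T (A x)).

Definition opnormA (A T : H -> H) : R :=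
  sup [set r : R | exists x, normA A x = 1 /\ r = normA A (T x)].

Definition numradA (A T : H -> H) : R :=
  sup [set r : R | exists x, normA A x = 1 /\ r = ComplexField.Normc.normc (ipA A (T x) x)].

End HilbertDefs.

(* Main.v *)
Require Import Defs.
From HB Require Import structures.
From mathcomp Require Import all_boot all_order all_algebra.
From mathcomp Require Import complex.
From mathcomp Require Import boolp classical_sets reals.
From mathcomp Require Import ring lra.
From Stdlib Require Import ClassicalEpsilon.
Set Implicit Arguments. Unset Strict Implicit. Unset Printing Implicit Defensive.
Import Order.TTheory GRing.Theory Num.Theory.
Local Open Scope ring_scope.
Local Open Scope complex_scope.
Local Open Scope classical_set_scope.

Section CplxFacts.
Variable R : realType.
Implicit Types z w : R[i].

Lemma mulcJ z : z * conjc z = `|z| ^+ 2.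
Proof.
case: z => a b; rewrite normc_def /=; simpc.
rewrite -rmorphXn /= sqr_sqrtr ?addr_ge0 ?sqr_ge0 //; congr (_ +i* _); ring.
Qed.

Lemma normcJ z : `|conjc z| = `|z|.
Proof. by case: z => a b; rewrite !normc_def /= sqrrN. Qed.

Lemma ge0_realc z : 0 <= z -> z = (complex.Re z)%:C.
Proof. by case: z => a b; rewrite lecE /= => /andP[/eqP -> _]. Qed.

Lemma conjc_realc (k : R) : conjc (k%:C) = k%:C.
Proof. by rewrite /= oppr0. Qed.

Lemma Re_realc (k : R) : complex.Re (k%:C) = k.
Proof. by []. Qed.

Lemma normc_realc z : `|z| = (ComplexField.Normc.normc z)%:C.
Proof. by []. Qed.

Lemma Re_le_normc z : complex.Re z <= ComplexField.Normc.normc z.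
Proof.
case: z => a b /=; apply: (le_trans (ler_norm a)).
by rewrite -sqrtr_sqr ler_sqrt ?addr_ge0 ?sqr_ge0 // lerDl sqr_ge0.
Qed.

Lemma normc_ge0 z : 0 <= ComplexField.Normc.normc z.
Proof. by case: z => a b /=; rewrite sqrtr_ge0. Qed.

Lemma ReD z w : complex.Re (z + w) = complex.Re z + complex.Re w.
Proof. by case: z; case: w. Qed.

Lemma ReJ z : complex.Re (conjc z) = complex.Re z.
Proof. by case: z. Qed.

Lemma ReM_real (k : R) z : complex.Re (k%:C * z) = k * complex.Re z.
Proof. by case: z => a b /=; ring. Qed.

Lemma conjcD z w : conjc (z + w) = conjc z + conjc w.
Proof. exact: rmorphD. Qed.
Lemma conjcM z w : conjc (z * w) = conjc z * conjc w.
Proof. exact: rmorphM. Qed.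
Lemma conjcN z : conjc (- z) = - conjc z.
Proof. exact: rmorphN. Qed.
Lemma conjc0' : conjc (0 : R[i]) = 0.
Proof. exact: rmorph0. Qed.
Lemma conjc1' : conjc (1 : R[i]) = 1.
Proof. exact: rmorph1. Qed.
Lemma conjcK' z : conjc (conjc z) = z.
Proof. exact: conjcK. Qed.

Lemma ReMn (n : nat) z : complex.Re (n%:R * z) = n%:R * complex.Re z.
Proof.
have -> : (n%:R : R[i]) = (n%:R : R)%:C by rewrite rmorph_nat.
exact: ReM_real.
Qed.

Lemma ltr0c (k : R) : (0 < k%:C) = (0 < k).
Proof. by rewrite !lt_def ler0c; congr (_ && _); rewrite (inj_eq (@complexI R)). Qed.

End CplxFacts.

Set Default Proof Using "All".
Section Form.
Variables (R : realType) (H : lmodType R[i]) (B : H -> H -> R[i]).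
Hypothesis Blin : forall (a : R[i]) (x y z : H), B (a *: x + y) z = a * B x z + B y z.
Hypothesis Bsym : forall x y : H, B y x = conjc (B x y).
Hypothesis Bpos : forall x : H, 0 <= B x x.

Lemma B0l z : B 0 z = 0.
Proof.
have h := Blin 1 0 0 z; rewrite scaler0 addr0 mul1r in h.
by apply: (@addrI _ (B 0 z)); rewrite addr0 -h.
Qed.

Lemma BDl x y z : B (x + y) z = B x z + B y z.
Proof. by rewrite -[x]scale1r Blin mul1r scale1r. Qed.

Lemma BZl a x z : B (a *: x) z = a * B x z.
Proof. by rewrite -[a *: x]addr0 Blin B0l addr0. Qed.

Lemma BNl x z : B (- x) z = - B x z.
Proof. by rewrite -scaleN1r BZl mulN1r. Qed.

Lemma BBl x y z : B (x - y) z = B x z - B y z.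
Proof. by rewrite BDl BNl. Qed.

Lemma B0r z : B z 0 = 0.
Proof. by rewrite (Bsym 0 z) B0l conjc0'. Qed.

Lemma BDr x y z : B z (x + y) = B z x + B z y.
Proof. by rewrite (Bsym (x + y) z) BDl conjcD -(Bsym x z) -(Bsym y z). Qed.

Lemma BZr a x z : B z (a *: x) = conjc a * B z x.
Proof. by rewrite (Bsym (a *: x) z) BZl conjcM -(Bsym x z). Qed.

Lemma BNr x z : B z (- x) = - B z x.
Proof. by rewrite (Bsym (- x) z) BNl conjcN -(Bsym x z). Qed.

Lemma BBr x y z : B z (x - y) = B z x - B z y.
Proof. by rewrite BDr BNr. Qed.

Lemma Bxx_real x : B x x = (complex.Re (B x x))%:C.
Proof. exact: ge0_realc. Qed.

Lemma ReBxx_ge0 x : 0 <= complex.Re (B x x).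
Proof. by have := Bpos x; rewrite {1}Bxx_real lecR. Qed.

Lemma Bquad a b x y : B (a *: x + b *: y) (a *: x + b *: y) =
  a * conjc a * B x x + a * conjc b * B x y + b * conjc a * conjc (B x y)
  + b * conjc b * B y y.
Proof.
rewrite !BDl !BDr !BZl !BZr (Bsym x y); ring.
Qed.

Lemma CS_aux x y : 0 < B y y -> `|B x y| ^+ 2 <= B x x * B y y.
Proof.
move=> qpos.
have := Bpos (B y y *: x + (- B x y) *: y); rewrite Bquad.
have qJ : conjc (B y y) = B y y by rewrite Bxx_real conjc_realc.
rewrite qJ conjcN => h.
have e : B y y * B y y * B x x + B y y * - conjc (B x y) * B x y +
     - B x y * B y y * conjc (B x y) + - B x y * - conjc (B x y) * B y y
     = B y y * (B x x * B y y - B x y * conjc (B x y)) by ring.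
by rewrite e pmulr_rge0 // subr_ge0 mulcJ in h.
Qed.

Lemma CS x y : `|B x y| ^+ 2 <= B x x * B y y.
Proof.
have [q0|qn0] := eqVneq (B y y) 0; last first.
  by apply: CS_aux; rewrite lt_def qn0 Bpos.
have [p0|pn0] := eqVneq (B x x) 0; last first.
  have h := @CS_aux y x; rewrite lt_def pn0 Bpos in h.
  by rewrite (Bsym x y) normcJ mulrC in h; apply: h.
rewrite q0 p0 mulr0.
have := Bpos (1 *: x + (- B x y) *: y); rewrite Bquad q0 p0 conjcN -mulcJ => h.
have e : 1 * conjc 1 * 0 + 1 * - conjc (B x y) * B x y +
    - B x y * conjc 1 * conjc (B x y) + - B x y * - conjc (B x y) * 0 =
    - (2%:R * (B x y * conjc (B x y)))
  by rewrite conjc1'; ring.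
by rewrite e oppr_ge0 pmulr_rle0 ?ltr0n // mulcJ in h.
Qed.

Definition nB x := Num.sqrt (complex.Re (B x x)).

Lemma nB_ge0 x : 0 <= nB x.
Proof. exact: sqrtr_ge0. Qed.

Lemma nB_sqr x : nB x ^+ 2 = complex.Re (B x x).
Proof. by rewrite sqr_sqrtr // ReBxx_ge0. Qed.

Lemma CSr x y : ComplexField.Normc.normc (B x y) <= nB x * nB y.
Proof.
have h := CS x y.
rewrite normc_realc -rmorphXn (Bxx_real x) (Bxx_real y) -rmorphM lecR in h.
rewrite -(ger0_norm (normc_ge0 (B x y))) -sqrtr_sqr /nB -sqrtrM ?ReBxx_ge0 //.
by rewrite ler_sqrt // mulr_ge0 // ReBxx_ge0.
Qed.

Lemma nB_triangle x y : nB (x + y) <= nB x + nB y.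
Proof.
rewrite -[nB x + nB y]ger0_norm ?addr_ge0 ?nB_ge0 // -sqrtr_sqr.
rewrite {1}/nB ler_sqrt ?sqr_ge0 //.
rewrite sqrrD !nB_sqr BDl !BDr !ReD (Bsym x y) ReJ.
have := Re_le_normc (B x y); have := CSr x y; lra.
Qed.

Lemma nB_scale a x : nB (a *: x) = ComplexField.Normc.normc a * nB x.
Proof.
have e : complex.Re (B (a *: x) (a *: x)) =
    ComplexField.Normc.normc a ^+ 2 * complex.Re (B x x).
  by rewrite BZl BZr mulrA mulcJ normc_realc -rmorphXn ReM_real.
by rewrite /nB e sqrtrM ?sqr_ge0 // sqrtr_sqr ger0_norm // normc_ge0.
Qed.

Lemma nB_opp x : nB (- x) = nB x.
Proof. by rewrite /nB BNl BNr opprK. Qed.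

Lemma nB0_B x w : nB x = 0 -> B x w = 0.
Proof.
move=> h; apply: ComplexField.Normc.eq0_normc; apply/eqP.
by rewrite eq_le normc_ge0 andbT; have := CSr x w; rewrite h mul0r.
Qed.

Lemma normc2M (w : R[i]) : ComplexField.Normc.normc (2%:R * w) = 2%:R * ComplexField.Normc.normc w.
Proof.
rewrite ComplexField.Normc.normcM; congr (_ * _).
apply: complexI; rewrite -normc_realc normr_nat; exact: (esym (rmorph_nat _ 2)).
Qed.

Lemma buzano a b e : B e e = 1 ->
  2%:R * ComplexField.Normc.normc (B a e * B e b) <=
  nB a * nB b + ComplexField.Normc.normc (B a b).
Proof.
move=> hee.
pose k := 2%:R * B b e; pose v := k *: e - b.
have hv : B v v = B b b.
  rewrite /v !BBl !BBr !BZl !BZr hee (Bsym b e) /k conjcM conjc_nat; ring.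
have hnv : nB v = nB b by rewrite /nB hv.
have hav : B a v = 2%:R * (B a e * B e b) - B a b.
  by rewrite /v BBr BZr /k conjcM conjc_nat (Bsym b e); ring.
have h1 := CSr a v; rewrite hav hnv in h1.
rewrite -normc2M.
have -> : 2%:R * (B a e * B e b) = (2%:R * (B a e * B e b) - B a b) + B a b
  by rewrite subrK.
apply: (le_trans (le_normcD _ _)); exact: lerD h1 (lexx _).
Qed.

End Form.

Lemma sqrtD_le (R : realType) (a b : R) : 0 <= a -> 0 <= b ->
  Num.sqrt (a + b) <= Num.sqrt a + Num.sqrt b.
Proof.
move=> a0 b0.
rewrite -[Num.sqrt a + _]ger0_norm ?addr_ge0 ?sqrtr_ge0 // -sqrtr_sqr.
rewrite ler_sqrt ?sqr_ge0 // sqrrD !sqr_sqrtr //.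
have : 0 <= Num.sqrt a * Num.sqrt b *+ 2 by rewrite mulrn_wge0 // mulr_ge0 ?sqrtr_ge0.
lra.
Qed.

Lemma inv_small (R : realType) (e : R) : 0 < e -> exists N : nat,
  forall k, (N <= k)%N -> k.+1%:R^-1 < e.
Proof.
move=> e0; have ei : 0 <= e^-1 by rewrite invr_ge0 ltW.
have := archi_boundP ei.
set N := Num.Def.archi_bound _ => hN; exists N => k hk.
rewrite -[e]invrK ltf_pV2 ?posrE ?invr_gt0 ?ltr0n //.
apply: (lt_le_trans hN); rewrite ler_nat; exact: leqW.
Qed.

Section Proj.
Variables (R : realType) (H : lmodType R[i]) (ip : H -> H -> R[i]).
Hypothesis hH : is_hilbert_space ip.

Lemma ip_lin : forall (a : R[i]) (x y z : H), ip (a *: x + y) z = a * ip x z + ip y z.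
Proof. by case: hH. Qed.
Lemma ip_sym : forall x y : H, ip y x = conjc (ip x y).
Proof. by case: hH. Qed.
Lemma ip_pos : forall x : H, 0 <= ip x x.
Proof. by case: hH. Qed.
Lemma ip_def : forall x : H, ip x x = 0 -> x = 0.
Proof. by case: hH. Qed.
Lemma ip_complete : forall u : nat -> H,
         (forall e : R, 0 < e -> exists N, forall m n, (N <= m)%N -> (N <= n)%N ->
             hnorm ip (u m - u n) < e) ->
         exists l : H, forall e : R, 0 < e -> exists N, forall n, (N <= n)%N ->
             hnorm ip (u n - l) < e.
Proof. by case: hH. Qed.

Local Notation q x := (complex.Re (ip x x)).

Lemma hnorm0_eq x : hnorm ip x = 0 -> x = 0.
Proof.
move=> h; apply: ip_def; rewrite (Bxx_real ip_lin ip_sym ip_pos x).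
have : q x = 0.
  by have := nB_sqr ip_lin ip_sym ip_pos x; rewrite /nB -/(hnorm ip x) h expr0n.
by move=> ->.
Qed.

Lemma ip_orth0 x : (forall w, ip w x = 0) -> x = 0.
Proof. by move=> h; apply: ip_def; apply: h. Qed.

Lemma projection (M : H -> Prop) : M 0 ->
  (forall x y, M x -> M y -> M (x + y)) -> (forall a x, M x -> M (a *: x)) ->
  (forall l, (forall e, 0 < e -> exists m, M m /\ hnorm ip (l - m) < e) -> M l) ->
  forall u, exists n, M n /\ forall m, M m -> ip (u - n) m = 0.
Proof.
move=> M0 MD MZ Mcl u.
have MB x y : M x -> M y -> M (x - y).
  by move=> mx my; apply: MD => //; rewrite -scaleN1r; apply: MZ.
pose D := [set r : R | exists m, M m /\ r = q (u - m)].
pose d := inf D.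
have D0 : D !=set0 by exists (q (u - 0)); exists 0.
have Dlb : has_lbound D.
  by exists 0 => r [m [_ ->]]; exact: (ReBxx_ge0 ip_lin ip_sym ip_pos).
have dlb m : M m -> d <= q (u - m).
  by move=> mm; apply: (ge_inf Dlb); exists m.
have d0 : 0 <= d.
  by apply: lb_le_inf => // r [m [_ ->]]; exact: (ReBxx_ge0 ip_lin ip_sym ip_pos).
have adh k : exists m, M m /\ q (u - m) < d + k.+1%:R^-1.
  have kp : 0 < k.+1%:R^-1 :> R by rewrite invr_gt0 ltr0Sn.
  have [r [m [mm ->]] hr] := inf_adherent kp (conj D0 Dlb).
  by exists m.
have [ms hms] := @choice _ _ _ adh.
(* parallelogram *)
have par j k : q (ms j - ms k) <= 2%:R * j.+1%:R^-1 + 2%:R * k.+1%:R^-1.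
  have [mj hj] := hms j; have [mk hk] := hms k.
  pose w := (2%:R^-1 : R[i]) *: (ms j + ms k).
  have mw : M w by apply: MZ; apply: MD.
  have hw := dlb _ mw.
  have e2 : (2%:R : R[i]) *: (u - w) = (u - ms j) + (u - ms k).
    rewrite scalerBr /w scalerA mulfV ?pnatr_eq0 // scale1r.
    by rewrite scaler_nat mulr2n opprD addrACA.
  have e3 : ms j - ms k = (u - ms k) - (u - ms j).
    by rewrite opprB [RHS]addrC addrA subrK.
  have hpar : ip (ms j - ms k) (ms j - ms k) + ip (2%:R *: (u - w)) (2%:R *: (u - w))
     = 2%:R * ip (u - ms j) (u - ms j) + 2%:R * ip (u - ms k) (u - ms k).
    rewrite e2 e3; set x := u - ms j; set y := u - ms k.
    rewrite !(BBl ip_lin ip_sym ip_pos, BDl ip_lin ip_sym ip_pos, BBr ip_lin ip_sym ip_pos, BDr ip_lin ip_sym ip_pos); ring.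
  have hq : q (ms j - ms k) + 4%:R * q (u - w)
      = 2%:R * q (u - ms j) + 2%:R * q (u - ms k).
    have := congr1 (@complex.Re R) hpar.
    rewrite !ReD (BZl ip_lin ip_sym ip_pos) (BZr ip_lin ip_sym ip_pos) conjc_nat mulrA -natrM.
    by rewrite !ReMn.
  move: hq hw hj hk; set a := j.+1%:R^-1; set b := k.+1%:R^-1.
  set x1 := q (ms j - ms k); set x2 := q (u - w); set x3 := q (u - ms j); set x4 := q (u - ms k).
  lra.
have cauchy : forall e : R, 0 < e -> exists N, forall m n, (N <= m)%N -> (N <= n)%N ->
             hnorm ip (ms m - ms n) < e.
  move=> e e0.
  have e20 : 0 < e ^+ 2 / 4%:R by rewrite divr_gt0 ?exprn_gt0 ?ltr0n.
  have [N hN] := inv_small e20.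
  exists N => j k hj hk.
  rewrite /hnorm -[e]ger0_norm ?(ltW e0) // -sqrtr_sqr ltr_sqrt ?exprn_gt0 //.
  apply: (le_lt_trans (par j k)).
  have := hN _ hj; have := hN _ hk.
  set a := j.+1%:R^-1; set b := k.+1%:R^-1; set E := e ^+ 2; lra.
have [n hn] := ip_complete cauchy.
exists n.
have Mn : M n.
  apply: Mcl => e e0; have [N hN] := hn e e0; exists (ms N); split; first by case: (hms N).
  have := hN N (leqnn N).
  by rewrite -opprB /hnorm -/(nB ip _) (nB_opp ip_lin ip_sym ip_pos).
split => // m mm.
have qle : q (u - n) <= d.
  have hle : hnorm ip (u - n) <= Num.sqrt d.
    apply/ler_addgt0Pr => e e0.
    have e2 : 0 < e / 2%:R by rewrite divr_gt0 ?ltr0n.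
    have [N1 hN1] := hn _ e2.
    have e4 : 0 < (e / 2%:R) ^+ 2 by rewrite exprn_gt0.
    have [N2 hN2] := inv_small e4.
    pose k := maxn N1 N2.
    have h1 := hN1 k (leq_maxl _ _); have h2 := hN2 k (leq_maxr _ _).
    have [_ hk] := hms k.
    have tri : hnorm ip (u - n) <= hnorm ip (u - ms k) + hnorm ip (ms k - n).
      have -> : u - n = (u - ms k) + (ms k - n) by rewrite addrA subrK.
      exact: (nB_triangle ip_lin ip_sym ip_pos).
    have h3 : hnorm ip (u - ms k) <= Num.sqrt d + e / 2%:R.
      apply: (le_trans (y := Num.sqrt (d + k.+1%:R^-1))).
        by rewrite /hnorm ler_sqrt ?addr_ge0 ?invr_ge0 ?ler0n // ltW.
      apply: (le_trans (sqrtD_le d0 _)); first by rewrite invr_ge0 ler0n.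
      rewrite lerD2l -[e / 2%:R]ger0_norm ?(ltW e2) // -sqrtr_sqr ler_sqrt ?ltW //.
    have := tri; have := h3; have := h1; lra.
  by move: hle; rewrite /hnorm ler_sqrt.
have qm0 : 0 <= q m by exact: (ReBxx_ge0 ip_lin ip_sym ip_pos).
pose t := (q m + 1)^-1.
have t0 : 0 < t by rewrite invr_gt0; lra.
have tq : 0 < 2%:R - t * q m.
  have : t * q m <= 1 by rewrite mulrC ler_pdivrMr ?mul1r; lra.
  lra.
have Mw : M (n + (t%:C * ip (u - n) m) *: m) by apply: MD => //; apply: MZ.
have hw := dlb _ Mw.
have e1 : u - (n + (t%:C * ip (u - n) m) *: m) = (u - n) - (t%:C * ip (u - n) m) *: m.
  by rewrite opprD addrA.
rewrite e1 in hw.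
have E : ip (u - n - (t%:C * ip (u - n) m) *: m) (u - n - (t%:C * ip (u - n) m) *: m)
   = ip (u - n) (u - n) - t%:C * (ip (u - n) m * conjc (ip (u - n) m)) * (2%:R - t%:C * ip m m).
  move: (u - n) => v.
  rewrite !(BBl ip_lin ip_sym ip_pos) !(BBr ip_lin ip_sym ip_pos) !(BZl ip_lin ip_sym ip_pos) !(BZr ip_lin ip_sym ip_pos) (ip_sym v m).
  rewrite conjcM conjc_realc; ring.
have hC : d%:C <= ip (u - n) (u - n) - t%:C * (ip (u - n) m * conjc (ip (u - n) m)) * (2%:R - t%:C * ip m m).
  by rewrite -E (Bxx_real ip_lin ip_sym ip_pos (u - n - _)) lecR.
have hv : ip (u - n) (u - n) <= d%:C by rewrite (Bxx_real ip_lin ip_sym ip_pos (u - n)) lecR.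
have := le_trans hv hC.
rewrite lerDl oppr_ge0 (Bxx_real ip_lin ip_sym ip_pos m) mulcJ.
have -> : (2%:R : R[i]) - t%:C * (q m)%:C = (2%:R - t * q m)%:C
  by rewrite rmorphB rmorphM rmorph_nat.
rewrite pmulr_lle0 ?ltr0c // pmulr_rle0 ?ltr0c // => hc.
have : `|ip (u - n) m| ^+ 2 == 0 by rewrite eq_le hc exprn_ge0.
by rewrite expf_eq0 /= normr_eq0 => /eqP.
Qed.
End Proj.
Lemma small_bound (R : realType) (C x : R) : 0 <= x ->
  (forall e, 0 < e -> x <= C * e) -> x <= 0.
Proof.
move=> x0 h; apply/ler_addgt0Pr => e e0; rewrite add0r.
have Cp : 0 < `|C| + 1 by rewrite ltr_pwDr // normr_ge0.
have e1 : 0 < e / (`|C| + 1) by rewrite divr_gt0.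
apply: (le_trans (h _ e1)); apply: (le_trans (ler_norm _)).
rewrite normrM (gtr0_norm e1) mulrA ler_pdivrMr // mulrC ler_pM2l //.
lra.
Qed.


Section Riesz.
Variables (R : realType) (H : lmodType R[i]) (ip : H -> H -> R[i]).
Hypothesis hH : is_hilbert_space ip.

Local Notation L := (ip_lin hH).
Local Notation S := (ip_sym hH).
Local Notation P := (ip_pos hH).

Lemma riesz (f : H -> R[i]) :
  (forall a x y, f (a *: x + y) = a * f x + f y) ->
  (exists C, forall x, ComplexField.Normc.normc (f x) <= C * hnorm ip x) ->
  exists r, forall x, f x = ip x r.
Proof.
move=> flin [C0 hC0].
pose C := `|C0|.
have hC x : ComplexField.Normc.normc (f x) <= C * hnorm ip x.
  apply: (le_trans (hC0 x)); apply: ler_wpM2r; [exact: sqrtr_ge0 | exact: ler_norm].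
have f0 : f 0 = 0.
  have h := flin 1 0 0; rewrite scaler0 addr0 mul1r in h.
  by apply: (@addrI _ (f 0)); rewrite addr0 -h.
have fD x y : f (x + y) = f x + f y by rewrite -[x]scale1r flin mul1r scale1r.
have fZ a x : f (a *: x) = a * f x by rewrite -[a *: x]addr0 flin f0 addr0.
have fB x y : f (x - y) = f x - f y by rewrite -scaleN1r fD fZ mulN1r.
have [all0|] := pselect (forall x, f x = 0).
  by exists 0 => x; rewrite all0 (B0r L S P).
move=> /existsNP [u fu].
have Mcl : forall l, (forall e, 0 < e -> exists m, f m = 0 /\ hnorm ip (l - m) < e) -> f l = 0.
  move=> l hl; apply: ComplexField.Normc.eq0_normc; apply/eqP.
  rewrite eq_le normc_ge0 andbT; apply: (@small_bound _ C); first exact: normc_ge0.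
  move=> e e0; have [m [fm hm]] := hl e e0.
  have -> : f l = f (l - m) by rewrite fB fm subr0.
  apply: (le_trans (hC _)); apply: ler_wpM2l; [exact: normr_ge0 | exact: ltW].
have MD x y : f x = 0 -> f y = 0 -> f (x + y) = 0 by move=> hx hy; rewrite fD hx hy addr0.
have MZ a x : f x = 0 -> f (a *: x) = 0 by move=> hx; rewrite fZ hx mulr0.
have [n [fn hn]] := projection hH (M := fun x => f x = 0) f0 MD MZ Mcl u.
move: hn; set v := u - n => hn.
have fv : f v = f u by rewrite /v fB fn subr0.
have vv0 : ip v v != 0.
  apply/eqP => /(ip_def hH) v0; apply: fu; by rewrite -fv v0 f0.
have hJ : conjc (ip v v) = ip v v by rewrite (Bxx_real L S P v) conjc_realc.
exists ((conjc (f v) / ip v v) *: v) => x.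
have hm : ip v (f x *: v - f v *: x) = 0 by apply: hn; rewrite fB !fZ mulrC subrr.
rewrite (BBr L S P) !(BZr L S P) in hm.
have hm2 : f x * ip v v = f v * ip x v.
  have := congr1 conjc hm; rewrite conjcD conjcN !conjcM !conjcK hJ -(S v x) conjc0'.
  by move/eqP; rewrite subr_eq0 => /eqP.
rewrite (BZr L S P) conjcM conjcK conjc_inv hJ.
apply: (mulIf vv0); rewrite hm2; field.
exact: vv0.
Qed.
End Riesz.

Lemma eq_sub0 (R : realType) (a b c : R[i]) : a = b -> c = a - b -> c = 0.
Proof. by move=> -> ->; rewrite subrr. Qed.

Lemma conjci (R : realType) : conjc ('i : R[i]) = - 'i.
Proof. by apply/eqP; rewrite eq_complex /= oppr0 !eqxx. Qed.

Lemma i_neq0 (R : realType) : ('i : R[i]) != 0.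
Proof. by rewrite eq_complex /= oner_eq0 andbF. Qed.

Lemma cj_ge0 (R : realType) (z : R[i]) : 0 <= z -> conjc z = z.
Proof. by move/ge0_realc => ->; rewrite conjc_realc. Qed.

Section Adj.
Variables (R : realType) (H : lmodType R[i]) (ip : H -> H -> R[i]).
Hypothesis hH : is_hilbert_space ip.

Local Notation L := (ip_lin hH).
Local Notation S := (ip_sym hH).
Local Notation P := (ip_pos hH).

Lemma bound_pos (T : H -> H) : bounded_op ip T ->
  exists M : R, 0 < M /\ forall x, hnorm ip (T x) <= M * hnorm ip x.
Proof.
move=> [_ [M hM]]; exists (`|M| + 1); split; first by rewrite ltr_pwDr // normr_ge0.
move=> x; apply: (le_trans (hM x)); apply: ler_wpM2r; first exact: sqrtr_ge0.
by apply: (le_trans (ler_norm M)); rewrite lerDl.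
Qed.

Lemma op0 (T : H -> H) : bounded_op ip T -> T 0 = 0.
Proof.
move=> [Tl _]; have h := Tl 1 0 0; rewrite scaler0 addr0 scale1r in h.
by apply: (@addrI _ (T 0)); rewrite addr0 -h.
Qed.

Lemma opD (T : H -> H) : bounded_op ip T -> forall x y, T (x + y) = T x + T y.
Proof. by move=> hT x y; rewrite -[x]scale1r hT.1 !scale1r. Qed.

Lemma opZ (T : H -> H) : bounded_op ip T -> forall a x, T (a *: x) = a *: T x.
Proof. by move=> hT a x; rewrite -[a *: x]addr0 hT.1 op0 // addr0. Qed.

Lemma opB (T : H -> H) : bounded_op ip T -> forall x y, T (x - y) = T x - T y.
Proof. by move=> hT x y; rewrite opD // -scaleN1r opZ // scaleN1r. Qed.

Lemma adjoint_spec (T : H -> H) : bounded_op ip T ->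
  forall x y, ip (T x) y = ip x (adjoint ip T y).
Proof.
move=> hT.
have ex : exists F : H -> H, forall x y, ip (T x) y = ip x (F y).
  have hy : forall y, exists r, forall x, ip (T x) y = ip x r.
    move=> y; apply: (riesz hH (f := fun x => ip (T x) y)).
      by move=> a x z; rewrite hT.1 L.
    have [M [M0 hM]] := bound_pos hT.
    exists (M * hnorm ip y) => x.
    apply: (le_trans (CSr L S P (T x) y)).
    rewrite mulrAC; apply: ler_wpM2r; first exact: sqrtr_ge0.
    exact: hM.
  have [F hF] := @choice _ _ _ hy.
  by exists F => x y; apply: hF.
rewrite /adjoint; move: ex; exact: epsilon_spec.
Qed.

Lemma kernel_closed (T : H -> H) : bounded_op ip T ->
  forall l, (forall e, 0 < e -> exists m, T m = 0 /\ hnorm ip (l - m) < e) -> T l = 0.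
Proof.
move=> hT l hl; have [M [M0 hM]] := bound_pos hT.
apply: (hnorm0_eq hH); apply/eqP; rewrite eq_le sqrtr_ge0 andbT.
apply: (@small_bound _ M); first exact: sqrtr_ge0.
move=> e e0; have [m [Tm hm]] := hl e e0.
have -> : T l = T (l - m) by rewrite opB // Tm subr0.
apply: (le_trans (hM _)); apply: ler_wpM2l; [exact: ltW | exact: ltW].
Qed.

End Adj.

Lemma bernoulli (R : realType) (q : R) (n : nat) : 1 <= q -> 1 + n%:R * (q - 1) <= q ^+ n.
Proof.
move=> q1; elim: n => [|n IH]; first by rewrite mul0r addr0 expr0.
rewrite exprSr; apply: (le_trans (y := (1 + n%:R * (q - 1)) * q)); last first.
  by apply: ler_wpM2r => //; lra.
have n0 : 0 <= n%:R :> R by exact: ler0n.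
have := mulr_ge0 n0 (sqr_ge0 (q - 1)).
rewrite -natr1 /=; nra.
Qed.

Lemma grow (R : realType) (a b c : R) : 0 < c -> 0 <= a ->
  (forall k : nat, a ^+ (2 ^ k) <= b * c ^+ (2 ^ k)) -> a <= c.
Proof.
move=> c0 a0 h; rewrite leNgt; apply/negP => ca.
pose q := a / c.
have q1 : 1 <= q by rewrite /q ler_pdivlMr // mul1r ltW.
have hq k : q ^+ (2 ^ k) <= b.
  by rewrite /q expr_div_n ler_pdivrMr ?exprn_gt0 //; exact: h.
have q1' : 0 < q - 1.
  by rewrite subr_gt0 /q ltr_pdivlMr // mul1r.
have bnd : 0 <= `|b| / (q - 1) by rewrite divr_ge0 ?normr_ge0 ?ltW.
pose k := Num.Def.archi_bound (`|b| / (q - 1)).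
have hk := archi_boundP bnd; rewrite -/k ltr_pdivrMr // in hk.
have h1 := bernoulli (2 ^ k) q1.
have h2 : k%:R <= (2 ^ k)%:R :> R by rewrite ler_nat ltnW // ltn_expl.
have h3 := hq k.
have h4 : b <= `|b| by exact: ler_norm.
have : k%:R * (q - 1) <= (2 ^ k)%:R * (q - 1) by apply: ler_wpM2r => //; exact: ltW.
move: h1 h3 hk h4; set K := k%:R; set K2 := (2 ^ k)%:R; set Q := q ^+ (2 ^ k).
lra.
Qed.

Section MainA.
Variables (R : realType) (H : lmodType R[i]) (ip : H -> H -> R[i]).
Hypothesis hH : is_hilbert_space ip.
Variable A : H -> H.
Hypothesis hA : positive_op ip A.

Local Notation L := (ip_lin hH).
Local Notation S := (ip_sym hH).
Local Notation P := (ip_pos hH).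
Local Notation B := (ipA ip A).

Lemma Abnd : bounded_op ip A.
Proof. by case: hA. Qed.

Lemma BL : forall (a : R[i]) (x y z : H), B (a *: x + y) z = a * B x z + B y z.
Proof. by move=> a x y z; rewrite /ipA Abnd.1 L. Qed.

Lemma BP : forall x : H, 0 <= B x x.
Proof. by case: hA. Qed.

Lemma BS : forall x y : H, B y x = conjc (B x y).
Proof.
move=> x y; rewrite /ipA.
have hxx := cj_ge0 (BP x); have hyy := cj_ge0 (BP y).
rewrite /ipA in hxx hyy.
have h1 := cj_ge0 (BP (x + y)).
have h2 := cj_ge0 (BP ('i *: y + x)).
rewrite /ipA (opD hH Abnd) !(BDl L S P) !(BDr L S P) !conjcD hxx hyy in h1.
rewrite /ipA Abnd.1 !(BDl L S P) !(BDr L S P) !(BZl L S P) !(BZr L S P) in h2.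
rewrite !conjcD !conjcM ?conjcK' ?conjcN ?conjci ?opprK hxx hyy in h2.
have k1 : conjc (ip (A x) y) + conjc (ip (A y) x) - ip (A x) y - ip (A y) x = 0.
  by apply: (eq_sub0 h1); ring.
have k2 : 'i * (conjc (ip (A x) y) - conjc (ip (A y) x) - ip (A y) x + ip (A x) y) = 0.
  apply: (eq_sub0 h2); ring.
move/eqP: k2; rewrite mulf_eq0 (negbTE (i_neq0 R)) /= => /eqP k2.
have e : (2%:R : R[i]) * (ip (A y) x - conjc (ip (A x) y)) =
   - ((conjc (ip (A x) y) + conjc (ip (A y) x) - ip (A x) y - ip (A y) x) +
      (conjc (ip (A x) y) - conjc (ip (A y) x) - ip (A y) x + ip (A x) y)) by ring.
rewrite k1 k2 addr0 oppr0 in e.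
move/eqP: e; rewrite mulf_eq0 pnatr_eq0 /= subr_eq0 => /eqP //.
Qed.

Lemma Aself v w : ip (A v) w = ip v (A w).
Proof. by have := BS w v; rewrite /ipA => ->; rewrite -S. Qed.

Local Notation BL' := BL.
Local Notation nA := (nB (ipA ip A)).

Lemma nA_le_hnorm : exists MA : R, 0 < MA /\ forall y, nA y <= MA * hnorm ip y.
Proof.
have [M [M0 hM]] := bound_pos hH Abnd.
exists (Num.sqrt M); split; first by rewrite sqrtr_gt0.
move=> y; rewrite /nB /hnorm -sqrtrM; last exact: ltW.
rewrite ler_sqrt; last by rewrite mulr_ge0 ?(ltW M0) ?(ReBxx_ge0 L S P).
rewrite /ipA; apply: (le_trans (Re_le_normc _)); apply: (le_trans (CSr L S P _ _)).
rewrite -(nB_sqr L S P y) expr2 mulrA; apply: ler_wpM2r; first exact: sqrtr_ge0.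
exact: hM.
Qed.


Lemma sa_bound (T : H -> H) (M : R) : 0 < M ->
  (forall y z, B (T y) z = B y (T z)) ->
  (forall k y, hnorm ip (iter k T y) <= M ^+ k * hnorm ip y) ->
  forall y, nA (T y) <= M * nA y.
Proof.
move=> M0 Tsa Tb.
have [MA [MA0 hMA]] := nA_le_hnorm.
have itS k y z : B (iter k T y) z = B y (iter k T z).
  elim: k y z => [//|k IH] y z.
  by rewrite iterS Tsa IH -iterSr.
have step m y' : nA (iter m T y') ^+ 2 <= nA (iter (m + m) T y') * nA y'.
  rewrite (nB_sqr BL BS BP) itS -iterD.
  apply: (le_trans (Re_le_normc _)); rewrite mulrC; exact: (CSr BL BS BP).
move=> y.
have nu0 : 0 <= nA y by exact: sqrtr_ge0.
have [nz|npos] := eqVneq (nA y) 0.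
  have := step 1%N y; rewrite nz mulr0 /= => h.
  have : nA (T y) ^+ 2 == 0 by rewrite eq_le h sqr_ge0.
  by rewrite sqrf_eq0 => /eqP ->; rewrite mulr_ge0 // ltW.
have nup : 0 < nA y by rewrite lt_def npos nu0.
pose t k := nA (iter (2 ^ k) T y).
pose s k := t k / nA y.
have t0 k : 0 <= t k by exact: sqrtr_ge0.
have s0 k : 0 <= s k by rewrite divr_ge0.
have hst k : t k ^+ 2 <= t k.+1 * nA y.
  by rewrite /t expnS mul2n -addnn; exact: step.
have hss k : s k ^+ 2 <= s k.+1.
  rewrite /s expr_div_n ler_pdivrMr ?exprn_gt0 //.
  have -> : t k.+1 / nA y * nA y ^+ 2 = t k.+1 * nA y by rewrite expr2 mulrA divfK.
  exact: hst.
have ind k : s 0%N ^+ (2 ^ k) <= s k.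
  elim: k => [|k IH]; first by rewrite expn0 expr1.
  rewrite expnS mulnC exprM; apply: (le_trans _ (hss k)).
  by rewrite ler_pXn2r ?nnegrE ?exprn_ge0.
have sb k : s 0%N ^+ (2 ^ k) <= (MA * hnorm ip y / nA y) * M ^+ (2 ^ k).
  apply: (le_trans (ind k)); rewrite /s /t mulrAC ler_pM2r ?invr_gt0 //.
  apply: (le_trans (hMA _)); rewrite -mulrA ler_pM2l // mulrC; exact: Tb.
have := grow M0 (s0 0%N) sb.
by rewrite /s /t expn0 /= ler_pdivrMr.
Qed.


Variables (Sop S' : H -> H).
Hypothesis hSb : bounded_op ip Sop.
Hypothesis hS'b : bounded_op ip S'.
Hypothesis hSS' : forall x y, B (Sop x) y = B x (S' y).

Local Notation Ss := (sharpA ip A Sop).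

Lemma adjA y : adjoint ip Sop (A y) = A (S' y).
Proof.
apply/eqP; rewrite -subr_eq0; apply/eqP; apply: (ip_orth0 hH) => u.
rewrite (BBr L S P) -(adjoint_spec hH hSb) -Aself.
by have := hSS' u y; rewrite /ipA => ->; rewrite Aself subrr.
Qed.

Lemma SsA y : A (Ss y) = A (S' y).
Proof.
have MD x z : A x = 0 -> A z = 0 -> A (x + z) = 0.
  by move=> hx hz; rewrite (opD hH Abnd) hx hz addr0.
have MZ a x : A x = 0 -> A (a *: x) = 0 by move=> hx; rewrite (opZ hH Abnd) hx scaler0.
have ex : exists z : H, (forall w, A w = 0 -> ip z w = 0) /\
    (forall w, ip (A z - adjoint ip Sop (A y)) (A w) = 0).
  have [n [An hn]] := projection hH (M := fun w => A w = 0) (op0 hH Abnd) MD MZ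
    (kernel_closed hH Abnd) (S' y).
  exists (S' y - n); split; first exact: hn.
  by move=> w; rewrite adjA (opB hH Abnd) An subr0 subrr (B0l L S P).
have := epsilon_spec (inhabits (0 : H)) _ ex.
rewrite /sharpA /mp_inverse.
set z := epsilon _ _ => -[_ h2].
have := h2 (z - S' y); rewrite adjA -(opB hH Abnd) => /(ip_def hH).
by rewrite (opB hH Abnd) => /eqP; rewrite subr_eq0 => /eqP.
Qed.

Lemma keyP y w : B (Ss y) w = B y (Sop w).
Proof.
rewrite (BS (Sop w) y) hSS' -(BS w (S' y)).
by rewrite /ipA SsA.
Qed.

Lemma keyPc y w : B (Sop w) y = B w (Ss y).
Proof. by rewrite (BS (Ss y) w) keyP -(BS y (Sop w)). Qed.

Lemma S_Abound : exists cS : R, 0 < cS /\ forall y, nA (Sop y) <= cS * nA y.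
Proof.
have [M1 [M10 hM1]] := bound_pos hH hSb.
have [M2 [M20 hM2]] := bound_pos hH hS'b.
pose PT := fun y => S' (Sop y).
have PTsa y z : B (PT y) z = B y (PT z).
  rewrite /PT /= (BS z (S' (Sop y))) -hSS' -(BS (Sop z) (Sop y)).
  by rewrite hSS'.
have PTb k y : hnorm ip (iter k PT y) <= (M2 * M1) ^+ k * hnorm ip y.
  elim: k => [|k IH]; first by rewrite expr0 mul1r.
  rewrite iterS; apply: (le_trans (hM2 _)).
  apply: (le_trans (ler_wpM2l (ltW M20) (hM1 _))).
  rewrite exprSr (mulrC _ (M2 * M1)) -!mulrA !ler_pM2l //.
have hP := sa_bound (mulr_gt0 M20 M10) PTsa PTb.
exists (Num.sqrt (M2 * M1)); split; first by rewrite sqrtr_gt0 mulr_gt0.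
move=> y.
have nn : 0 <= nA y by exact: sqrtr_ge0.
have m0 : 0 <= M2 * M1 by rewrite mulr_ge0 // ltW.
rewrite -[nA y]ger0_norm // -sqrtr_sqr -sqrtrM //.
rewrite -[nA (Sop y)]ger0_norm ?sqrtr_ge0 // -sqrtr_sqr ler_sqrt; last by rewrite mulr_ge0 // sqr_ge0.
rewrite (nB_sqr BL BS BP) hSS'.
apply: (le_trans (Re_le_normc _)); apply: (le_trans (CSr BL BS BP _ _)).
rewrite expr2 mulrCA; apply: ler_wpM2l => //; exact: hP.
Qed.

Lemma Ss_Abound : exists cT : R, 0 < cT /\ forall y, nA (Ss y) <= cT * nA y.
Proof.
have [cS [cS0 hcS]] := S_Abound.
exists cS; split => // y.
have nn : 0 <= nA (Ss y) by exact: sqrtr_ge0.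
have [z|nz] := eqVneq (nA (Ss y)) 0.
  by rewrite z; apply: mulr_ge0; [exact: ltW | exact: sqrtr_ge0].
have h : nA (Ss y) ^+ 2 <= nA y * (cS * nA (Ss y)).
  rewrite (nB_sqr BL BS BP) keyP.
  apply: (le_trans (Re_le_normc _)); apply: (le_trans (CSr BL BS BP _ _)).
  by apply: ler_wpM2l; [exact: sqrtr_ge0 | exact: hcS].
have pos : 0 < nA (Ss y) by rewrite lt_def nz nn.
by rewrite expr2 mulrA (mulrC (nA y) cS) ler_pM2r // in h.
Qed.


Definition ab (F : H -> H) := exists c : R, 0 <= c /\ forall y, nA (F y) <= c * nA y.

Lemma ab_comp F G : ab F -> ab G -> ab (fun x => F (G x)).
Proof.
move=> [c1 [c10 h1]] [c2 [c20 h2]]; exists (c1 * c2); split; first exact: mulr_ge0.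
move=> y; apply: (le_trans (h1 _)); rewrite -mulrA; exact: ler_wpM2l.
Qed.

Lemma ab_add F G : ab F -> ab G -> ab (fun x => F x + G x).
Proof.
move=> [c1 [c10 h1]] [c2 [c20 h2]]; exists (c1 + c2); split; first exact: addr_ge0.
move=> y; apply: (le_trans (nB_triangle BL BS BP _ _)); rewrite mulrDl; exact: lerD.
Qed.

Lemma ab_S : ab Sop.
Proof. by have [c [c0 h]] := S_Abound; exists c; split => //; exact: ltW. Qed.

Lemma ab_Ss : ab Ss.
Proof. by have [c [c0 h]] := Ss_Abound; exists c; split => //; exact: ltW. Qed.

Lemma opnorm_ub F x : ab F -> nA x = 1 -> nA (F x) <= opnormA ip A F.
Proof.
move=> [c [c0 hc]] x1; apply: sup_upper_bound; last by exists x.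
split; first by exists (nA (F x)); exists x.
exists c => r [y [y1 ->]]; change (nA y = 1) in y1; change (nA (F y) <= c).
by have := hc y; rewrite y1 mulr1.
Qed.

Lemma numrad_ub F x : ab F -> nA x = 1 ->
  ComplexField.Normc.normc (B (F x) x) <= numradA ip A F.
Proof.
move=> [c [c0 hc]] x1; apply: sup_upper_bound; last by exists x.
split; first by exists (ComplexField.Normc.normc (B (F x) x)); exists x.
exists c => r [y [y1 ->]].
apply: (le_trans (CSr BL BS BP _ _)); change (nA y = 1) in y1.
rewrite y1 mulr1; have := hc y; rewrite y1 mulr1 //.
Qed.

Lemma numrad_le F c : (exists x, nA x = 1) ->
  (forall x, nA x = 1 -> ComplexField.Normc.normc (B (F x) x) <= c) ->
  numradA ip A F <= c.
Proof.
move=> [x0 hx0] h; apply: ge_sup; first by exists (ComplexField.Normc.normc (B (F x0) x0)); exists x0.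
by move=> r [y [y1 ->]]; apply: h.
Qed.

Lemma normc_real (k : R) : 0 <= k -> ComplexField.Normc.normc (k%:C) = k.
Proof. by move=> k0; rewrite /= expr0n /= addr0 sqrtr_sqr ger0_norm. Qed.

Lemma unit_exists : (exists x : H, A x <> 0) -> exists x, nA x = 1.
Proof.
move=> [x hx].
have nz : nA x != 0.
  apply/eqP => h; apply: hx; apply: (ip_def hH).
  by have := @nB0_B _ _ _ BL BS BP x (A x) h; rewrite /ipA.
have np : 0 < nA x by rewrite lt_def nz sqrtr_ge0.
exists ((nA x)^-1%:C *: x).
by rewrite (nB_scale BL BS BP) normc_real ?invr_ge0 ?ltW // mulVf.
Qed.

Lemma pointwise x : nA x = 1 ->
  ComplexField.Normc.normc (B (Sop x) x) ^+ 4 <=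
  4%:R^-1 * nA (Ss (Sop (Ss (Sop x))) + Sop (Ss (Sop (Ss x))))
  + 2%:R^-1 * ComplexField.Normc.normc (B (Ss (Sop (Sop (Ss x)))) x).
Proof.
move=> x1.
have Bxx : B x x = 1.
  rewrite (Bxx_real BL BS BP x); have := nB_sqr BL BS BP x; rewrite x1 expr1n => <-.
  by [].
set r := ComplexField.Normc.normc (B (Sop x) x).
set a' := Sop (Ss x); set b' := Ss (Sop x).
have r0 : 0 <= r by exact: normc_ge0.
have h1 : r <= nA (Sop x).
  by have := CSr BL BS BP (Sop x) x; rewrite x1 mulr1.
have h2 : r <= nA (Ss x).
  by have := CSr BL BS BP x (Ss x); rewrite x1 mul1r /r keyPc.
have n1 : nA (Sop x) ^+ 2 = complex.Re (B x b').
  by rewrite (nB_sqr BL BS BP) keyPc.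
have n2 : nA (Ss x) ^+ 2 = complex.Re (B x a').
  by rewrite (nB_sqr BL BS BP) keyP.
have Rb : B x b' = (nA (Sop x) ^+ 2)%:C.
  by rewrite n1 /b' -keyPc -(Bxx_real BL BS BP).
have Ra : B a' x = (nA (Ss x) ^+ 2)%:C.
  by rewrite n2 (BS x a') /a' -keyP -(Bxx_real BL BS BP) (cj_ge0 (BP _)).
have buz := buzano BL BS BP a' b' Bxx.
rewrite Ra Rb -rmorphM normc_real ?mulr_ge0 ?sqr_ge0 // in buz.
have eU : B x (Ss (Sop (Ss (Sop x))) + Sop (Ss (Sop (Ss x)))) = B b' b' + B a' a'.
  rewrite (BDr BL BS BP) -/b' -/a'.
  by rewrite -(keyPc (Sop b') x) -(keyP (Sop x) b') -(keyP x (Ss a')) -(keyPc a' (Ss x)).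
have hU : nA a' ^+ 2 + nA b' ^+ 2 <= nA (Ss (Sop (Ss (Sop x))) + Sop (Ss (Sop (Ss x)))).
  rewrite !(nB_sqr BL BS BP) addrC -ReD -eU.
  apply: (le_trans (Re_le_normc _)); apply: (le_trans (CSr BL BS BP _ _)).
  by rewrite x1 mul1r.
have eV : B (Ss (Sop (Sop (Ss x)))) x = B a' b'.
  by rewrite keyP -/a' keyPc.
rewrite eV.
have amgm : 2%:R * (nA a' * nA b') <= nA a' ^+ 2 + nA b' ^+ 2.
  have := sqr_ge0 (nA a' - nA b'); rewrite sqrrB; lra.
have r4 : r ^+ 4 <= nA (Sop x) ^+ 2 * nA (Ss x) ^+ 2.
  have -> : r ^+ 4 = r ^+ 2 * r ^+ 2 by rewrite -exprD.
  apply: ler_pM; [exact: exprn_ge0 | exact: exprn_ge0 | |].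
    by rewrite lerXn2r // nnegrE // sqrtr_ge0.
  by rewrite lerXn2r // nnegrE // sqrtr_ge0.
move: r4 buz amgm hU.
rewrite [nA (Ss x) ^+ 2 * _]mulrC.
set X := r ^+ 4; set Y := nA (Sop x) ^+ 2 * nA (Ss x) ^+ 2.
set Z := nA a' * nA b'; set W := ComplexField.Normc.normc (B a' b').
set U := nA (Ss (Sop (Ss (Sop x))) + Sop (Ss (Sop (Ss x)))).
set Q := nA a' ^+ 2 + nA b' ^+ 2.
rewrite -/Y; lra.
all: exact: sqrtr_ge0.
Qed.


Lemma final_ineq : (exists x : H, A x <> 0) ->
  numradA ip A Sop ^+ 4 <=
    4^-1 * opnormA ip A (fun x => Ss (Sop (Ss (Sop x))) + Sop (Ss (Sop (Ss x))))
    + 2^-1 * numradA ip A (fun x => Ss (Sop (Sop (Ss x)))).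
Proof.
move=> hA0; have ex1 := unit_exists hA0.
have abU : ab (fun x => Ss (Sop (Ss (Sop x))) + Sop (Ss (Sop (Ss x)))).
  exact: (ab_add (ab_comp ab_Ss (ab_comp ab_S (ab_comp ab_Ss ab_S)))
                 (ab_comp ab_S (ab_comp ab_Ss (ab_comp ab_S ab_Ss)))).
have abV : ab (fun x => Ss (Sop (Sop (Ss x)))).
  exact: (ab_comp ab_Ss (ab_comp ab_S (ab_comp ab_S ab_Ss))).
set K := (X in _ <= X).
have hK x : nA x = 1 -> ComplexField.Normc.normc (B (Sop x) x) ^+ 4 <= K.
  move=> x1; apply: (le_trans (pointwise x1)); apply: lerD.
    by apply: ler_wpM2l; [rewrite invr_ge0 ler0n | exact: (opnorm_ub abU x1)].
  by apply: ler_wpM2l; [rewrite invr_ge0 ler0n | exact: (numrad_ub abV x1)].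
have [x0 hx0] := ex1.
have K0 : 0 <= K by apply: le_trans (hK x0 hx0); exact: exprn_ge0 (normc_ge0 _).
have hb x : nA x = 1 -> ComplexField.Normc.normc (B (Sop x) x) <= Num.sqrt (Num.sqrt K).
  move=> x1; set r := ComplexField.Normc.normc _.
  have r0 : 0 <= r by exact: normc_ge0.
  have -> : r = Num.sqrt (Num.sqrt (r ^+ 4)).
    rewrite (_ : 4 = 2 * 2)%N // exprM sqrtr_sqr ger0_norm ?exprn_ge0 //.
    by rewrite sqrtr_sqr ger0_norm.
  by rewrite ler_sqrt ?sqrtr_ge0 // ler_sqrt // hK.
have hn := numrad_le ex1 hb.
have n0 : 0 <= numradA ip A Sop.
  by apply: le_trans (numrad_ub ab_S hx0); exact: normc_ge0.
apply: (le_trans (y := Num.sqrt (Num.sqrt K) ^+ 4)).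
  by rewrite lerXn2r // nnegrE // sqrtr_ge0.
by rewrite (_ : 4 = 2 * 2)%N // exprM sqr_sqrtr ?sqrtr_ge0 // sqr_sqrtr.
Qed.

End MainA.

Theorem corollary3p11 (R : realType) (H : lmodType R[i]) (ip : H -> H -> R[i])
  (hH : is_hilbert_space ip) (A : H -> H)
  (hA : positive_op ip A) (hA0 : exists x : H, A x <> 0)
  (S : H -> H) (hS : in_BA ip A S) :
  let Ss := sharpA ip A S in
  numradA ip A S ^+ 4 <=
    4^-1 * opnormA ip A (fun x => Ss (S (Ss (S x))) + S (Ss (S (Ss x))))
    + 2^-1 * numradA ip A (fun x => Ss (S (S (Ss x)))).
Proof.
case: hS => hSb [S' [hS'b hSS']].
exact: (@final_ineq R H ip hH A hA S S' hSb hS'b hSS' hA0).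
Qed.
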